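(* Let $\mathcal{G}_D$ be a bipartite planar graph with an isoradial embedding, let $(f_v(z))_v$ be a special discrete analytic function, and let $\mu$ be a measure on the plane such that the integrals $\int f_b(z)\,d\mu(z)$ are defined (absolutely convergent). Then $F(b)=\int f_b(z)\,d\mu(z)$, $b$ black, is a discrete analytic function, i.e. $\sum_{b\in B}\bar\partial(w,b)F(b)=0$ for every white vertex $w$.
   Context: An isoradial embedding of a planar graph is an embedding in which every face is inscribed in a circle of radius $1$ whose center lies in the closure of the face; the dual is embedded at the circumcenters. For each edge $e$ the rhombus $R(e)$ of side $1$ has as vertices the endpoints of $e$ and of its dual edge; rhombus edges join a vertex of $\mathcal{G}_D$ to a dual vertex. Vertices of $\mathcal{G}_D$ are black ($B$) or white. $\bar\partial$ is the symmetric matrix, zero on non-adjacent pairs, with $\bar\partial(w,b)=\bar\partial(b,w)=i(x-y)$ when $R(wb)$ has vertices $w,x,b,y$ in counterclockwise order (as complex numbers). A special discrete analytic function is a family of functions $f_v(z)$, indexed by the rhombus vertices $v$, such that for each rhombus edge from $v$ to $v'$ with $\mathcal{G}_D$-endpoint $u$, letting $e^{i\alpha}$ be the unit vector along the edge oriented away from $u$ if $u$ is white and towards $u$ if $u$ is black: $f_{v'}=f_v/(z-e^{i\alpha})$ if traversal from $v$ to $v'$ is in the direction of $e^{i\alpha}$, and $f_{v'}=f_v\cdot(z-e^{i\alpha})$ otherwise. *)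

(* Defs.v *)
From HB Require Import structures.
From mathcomp Require Import all_boot all_order all_algebra.
From mathcomp Require Import complex.
From mathcomp Require Import all_classical all_reals all_analysis.
Set Implicit Arguments. Unset Strict Implicit. Unset Printing Implicit Defensive.
Import Order.TTheory GRing.Theory Num.Theory.
Local Open Scope ring_scope.

Section Geometry.
Variable R : realType.

Definition cre (z : R[i]) : R := complex.Re z.
Definition cim (z : R[i]) : R := complex.Im z.
Definition cnorm (z : R[i]) : R := ComplexField.Normc.normc z.
Definition expi (t : R) : R[i] := (cos t +i* sin t)%C.
Definition cdir (z : R[i]) : R[i] := z / ((cnorm z)%:C)%C.
(* cross product Im(conj a * b): > 0 iff b is counterclockwise from a *)
Definition cross (a b : R[i]) : R := cre a * cim b - cim a * cre b.
(* twice the signed area of the quadrilateral p0 p1 p2 p3 (shoelace);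
   it is > 0 iff p0,p1,p2,p3 are in counterclockwise order *)
Definition area4 (p0 p1 p2 p3 : R[i]) : R :=
  cross (p1 - p0) (p2 - p0) + cross (p2 - p0) (p3 - p0).
End Geometry.

(* An embedded planar graph G_D given by a rotation system.                 *)
(*   D        : faces of G_D = vertices of the dual graph                   *)
(*   dpos f   : position of the dual vertex f (circumcenter of the face f)  *)
(*   nbr v j  : (j < deg v) the neighbours of v, in counterclockwise order   *)
(*   face v j : (j < deg v) the face between nbr v j and nbr v (j+1 mod deg) *)
(* Indices are always read modulo deg v.                                    *)
Section Graph.
Variables (R : realType) (V D : eqType).
Variables (pos : V -> R[i]) (dpos : D -> R[i]).
Variables (deg : V -> nat) (nbr : V -> nat -> V) (face : V -> nat -> D).

Definition nbseq (v : V) : seq V := [seq nbr v j | j <- iota 0 (deg v)].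

Definition cnext (v : V) (j : nat) : nat := j.+1 %% deg v.
Definition cprev (v : V) (j : nat) : nat := (j + deg v).-1 %% deg v.

(* the interleaved cyclic sequence of rhombus-neighbour directions around v:
   edge to nbr v 0, face v 0, edge to nbr v 1, face v 1, ... *)
Definition rdir (v : V) (m : nat) : R[i] :=
  if odd m then dpos (face v m./2) - pos v else pos (nbr v m./2) - pos v.

(* Isoradial embedding of G_D (with its dual at the circumcenters):
   - simple, locally finite graph given by a rotation system whose faces are
     consistently labelled (combinatorial map);
   - straight-line embedding in which, around every vertex v, the edges and
     the centers of the faces are met in counterclockwise order, going
     around v exactly once; each face center lies (weakly) on the inner side
     of the edges of its face, i.e. in the closure of the face (the turning
     angles are in [0, pi/2], the base angles of the isosceles triangles
     (v, neighbour, center));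
   - every face is inscribed in the circle of radius 1 centred at its dual
     vertex. *)
Definition isoradial_embedding : Prop :=
  (forall v, (0 < deg v)%N) /\
  (forall v, uniq (nbseq v) /\ v \notin nbseq v) /\
  (forall u v, (u \in nbseq v) = (v \in nbseq u)) /\
  (* combinatorial consistency of faces: the face between nbr v j and
     nbr v (j+1) is the face following v around nbr v (j+1), and the face
     preceding v around nbr v j *)
  (forall v j, (j < deg v)%N ->
     let u := nbr v (cnext v j) in face u (index v (nbseq u)) = face v j) /\
  (forall v j, (j < deg v)%N ->
     let u := nbr v j in face u (cprev u (index v (nbseq u))) = face v j) /\
  (forall v j, (j < deg v)%N -> pos (nbr v j) != pos v) /\
  (forall v, exists t : nat -> R,
     (forall m, (m < (deg v).*2)%N -> 0 <= t m <= pi / 2) /\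
     \sum_(m < (deg v).*2) t m = 2 * pi /\
     (forall m, (m < (deg v).*2)%N ->
        cdir (rdir v (m.+1 %% (deg v).*2)) = cdir (rdir v m) * expi (t m))) /\
  (forall v j, (j < deg v)%N -> cnorm (dpos (face v j) - pos v) = 1).

Definition bipartite_colouring (black : V -> bool) : Prop :=
  forall v j, (j < deg v)%N -> black (nbr v j) != black v.

(* For the edge joining u to its j-th neighbour b, the
   dual edge joins face u (j-1) and face u j; dbar = i(x - y) where the
   rhombus R(ub) has vertices u, x, b, y in counterclockwise order. *)
Definition dbar_edge (u : V) (j : nat) : R[i] :=
  let b := pos (nbr u j) in
  let x := dpos (face u (cprev u j)) in
  let y := dpos (face u j) in
  if 0 <= area4 (pos u) x b y then 'i%C * (x - y) else 'i%C * (y - x).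

Definition dbar (u v : V) : R[i] :=
  let j := index v (nbseq u) in
  if (j < deg u)%N then dbar_edge u j else 0.

(* Special discrete analytic function f_v(z), v ranging over the rhombus
   vertices V (+) D.  Rhombus edges join a vertex u of G_D to the dual
   vertices face u j.  With e = e^{i alpha} the unit vector along the edge
   (away from u if u is white, towards u if u is black), the rule reads
   f_{v'} = f_v / (z - e) when going from v to v' in the direction of e, and
   f_{v'} = f_v (z - e) otherwise; both say f_src = (z - e) f_dst where src->dst
   is the direction of e.  We use this division-free form, for all z. *)
Definition special_discrete_analytic (black : V -> bool)
    (fV : V -> R[i] -> R[i]) (fD : D -> R[i] -> R[i]) : Prop :=
  forall u j, (j < deg u)%N ->
    let y := face u j in
    if black u then
      forall z, fD y z = (z - (pos u - dpos y)) * fV u z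
    else
      forall z, fV u z = (z - (dpos y - pos u)) * fD y z.

End Graph.

Section Integral.
Variable R : realType.

Definition of_pair (p : R * R) : R[i] := (p.1 +i* p.2)%C.

Definition cintegrable (mu : {measure set (R * R)%type -> \bar R})
    (f : R[i] -> R[i]) : Prop :=
  mu.-integrable setT (fun p => (cre (f (of_pair p)))%:E) /\
  mu.-integrable setT (fun p => (cim (f (of_pair p)))%:E).

Definition cintegral (mu : {measure set (R * R)%type -> \bar R})
    (f : R[i] -> R[i]) : R[i] :=
  (Rintegral mu setT (fun p => cre (f (of_pair p))) +i*
   Rintegral mu setT (fun p => cim (f (of_pair p))))%C.
End Integral.

(* Main.v *)
Require Import Defs.
From HB Require Import structures.
From mathcomp Require Import all_boot all_order all_algebra.
From mathcomp Require Import complex.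
From mathcomp Require Import all_classical all_reals all_analysis.
From mathcomp Require Import ring lra.
Import Order.TTheory GRing.Theory Num.Theory.
Local Open Scope ring_scope.

Section Int.
Variable R : realType.
Variable mu : {measure set (R * R)%type -> \bar R}.

Lemma cre_mul (x y : R[i]) : cre (x * y) = cre x * cre y - cim x * cim y.
Proof. by case: x => a b; case: y => c d. Qed.
Lemma cim_mul (x y : R[i]) : cim (x * y) = cre x * cim y + cim x * cre y.
Proof. by case: x => a b; case: y => c d. Qed.
Lemma cre_add (x y : R[i]) : cre (x + y) = cre x + cre y.
Proof. by case: x => a b; case: y => c d. Qed.
Lemma cim_add (x y : R[i]) : cim (x + y) = cim x + cim y.
Proof. by case: x => a b; case: y => c d. Qed.

Lemma eqI (f g : R * R -> \bar R) : mu.-integrable setT f -> (forall p, f p = g p) -> mu.-integrable setT g.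
Proof. by move=> i h; apply: (eq_integrable measurableT f g _ i) => p _; rewrite h. Qed.

Arguments eqI {f g}.
Lemma int_comb (a b : R) (u v w : R * R -> R) :
  mu.-integrable setT (fun p => (u p)%:E) ->
  mu.-integrable setT (fun p => (v p)%:E) ->
  mu.-integrable setT (fun p => (w p)%:E) ->
  mu.-integrable setT (fun p => (a * u p - b * v p + w p)%:E) /\
  \int[mu]_p (a * u p - b * v p + w p) =
   a * \int[mu]_p (u p) - b * \int[mu]_p (v p) + \int[mu]_p (w p).
Proof.
move=> iu iv iw.
have iau : mu.-integrable setT (EFin \o (fun p => a * u p)).
  apply: (eqI (integrableZl measurableT a iu)) => p /=; by rewrite EFinM.
have ibv : mu.-integrable setT (EFin \o (fun p => b * v p)).
  apply: (eqI (integrableZl measurableT b iv)) => p /=; by rewrite EFinM.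
have iB : mu.-integrable setT (EFin \o (fun p => a * u p - b * v p)).
  apply: (eqI (integrableB measurableT iau ibv)) => p /=; by rewrite EFinB.
split.
  apply: (eqI (integrableD measurableT iB iw)) => p /=; by rewrite EFinD.
rewrite RintegralD //= RintegralB // RintegralZl // RintegralZl //.
Qed.

Lemma cint_step (c : R[i]) f g : cintegrable mu f -> cintegrable mu g ->
  cintegrable mu (fun z => c * f z + g z) /\
  cintegral mu (fun z => c * f z + g z) = c * cintegral mu f + cintegral mu g.
Proof.
move=> [fr fi] [gr gi].
have [i1 e1] := int_comb (cre c) (cim c) _ _ _ fr fi gr.
have [i2 e2] := int_comb (cre c) (- cim c) _ _ _ fi fr gi.
split; first split.
- apply: (eqI i1) => p /=; by rewrite cre_add cre_mul.
- apply: (eqI i2) => p /=; rewrite cim_add cim_mul; congr (_%:E); ring.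
rewrite /cintegral.
have -> : Rintegral mu setT (fun p => cre (c * f (of_pair p) + g (of_pair p))) =
  Rintegral mu setT (fun p => cre c * cre (f (of_pair p)) - cim c * cim (f (of_pair p)) + cre (g (of_pair p))).
  by apply: eq_Rintegral => p _; rewrite cre_add cre_mul.
have -> : Rintegral mu setT (fun p => cim (c * f (of_pair p) + g (of_pair p))) =
  Rintegral mu setT (fun p => cre c * cim (f (of_pair p)) - (- cim c) * cre (f (of_pair p)) + cim (g (of_pair p))).
  by apply: eq_Rintegral => p _; rewrite cim_add cim_mul; ring.
rewrite e1 e2.
clear i1 i2 e1 e2; case: c => a b /=.
set A := Rintegral _ _ _. set B := Rintegral _ _ _. set C := Rintegral _ _ _. set E := Rintegral _ _ _.
simpc. rewrite /cre /cim /=. congr (_ +i* _)%C; ring.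
Qed.

Lemma cint_sum (I : eqType) (s : seq I) (c : I -> R[i]) (f : I -> R[i] -> R[i]) :
  (forall i, i \in s -> cintegrable mu (f i)) ->
  cintegrable mu (fun z => \sum_(i <- s) c i * f i z) /\
  cintegral mu (fun z => \sum_(i <- s) c i * f i z) = \sum_(i <- s) c i * cintegral mu (f i).
Proof.
elim: s => [|a s IH] H.
  have i0 : mu.-integrable setT (fun p : R * R => (0:R)%:E) by exact: (integrable0 mu setT).
  split; first split.
  - apply: (eqI i0) => p; by rewrite big_nil.
  - apply: (eqI i0) => p; by rewrite big_nil.
  rewrite big_nil /cintegral.
  have h0 : forall h : R * R -> R, (forall p, h p = 0) -> Rintegral mu setT h = 0.
    move=> h hp; rewrite (@eq_Rintegral _ _ _ mu setT (fun=> 0)); last by move=> p _; rewrite hp.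
    by rewrite /Rintegral integral0.
  rewrite !h0 //; by move=> p; rewrite big_nil.
have [IH1 IH2] : cintegrable mu (fun z => \sum_(i <- s) c i * f i z) /\
  cintegral mu (fun z => \sum_(i <- s) c i * f i z) = \sum_(i <- s) c i * cintegral mu (f i).
  by apply: IH => i ins; apply: H; rewrite inE ins orbT.
have [i e] := cint_step (c a) _ _ (H a (mem_head _ _)) IH1.
split.
  case: i => i1 i2; split.
  - apply: (eqI i1) => p; by rewrite big_cons.
  - apply: (eqI i2) => p; by rewrite big_cons.
rewrite big_cons -IH2 -e. congr cintegral. apply: funext => z; by rewrite big_cons.
Qed.
End Int.
Set Implicit Arguments. Unset Strict Implicit.
Local Open Scope ring_scope.

Section Geo.
Variable R : realType.
Implicit Types p q u v : R[i].

Lemma cnorm_gt0 p : p != 0 -> 0 < cnorm p.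
Proof.
case: p => a b h; rewrite /cnorm /= sqrtr_gt0 lt_def addr_ge0 ?sqr_ge0 // andbT.
apply: contra h; rewrite paddr_eq0 ?sqr_ge0 // !sqrf_eq0 => /andP[/eqP -> /eqP ->].
by [].
Qed.

Lemma cnorm0 : cnorm (0 : R[i]) = 0.
Proof. by rewrite /cnorm /= expr0n /= addr0 sqrtr0. Qed.

Lemma crossZl (r : R) u v : cross (r%:C%C * u) v = r * cross u v.
Proof. case: u => a b; case: v => c d; rewrite /cross /cre /cim /=; ring. Qed.
Lemma crossZr (r : R) u v : cross u (r%:C%C * v) = r * cross u v.
Proof. case: u => a b; case: v => c d; rewrite /cross /cre /cim /=; ring. Qed.
Lemma cross_rot u e : cross u (u * e) = cim e * (cre u ^+ 2 + cim u ^+ 2).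
Proof. case: u => a b; case: e => c d; rewrite /cross /cre /cim /=; ring. Qed.

Lemma cdirK p : p != 0 -> p = (cnorm p)%:C%C * cdir p.
Proof.
move=> p0; have rp := cnorm_gt0 p0.
rewrite /cdir mulrC divfK //; apply/eqP => h.
have : complex.Re ((cnorm p)%:C%C) = 0 by rewrite h.
by move=> /= h'; move: rp; rewrite h' ltxx.
Qed.

Lemma cross_nonneg p q t : p != 0 -> q != 0 -> 0 <= t <= pi / 2 ->
  cdir q = cdir p * expi t -> 0 <= cross p q.
Proof.
move=> p0 q0 /andP[t0 t1] e.
rewrite (cdirK p0) (cdirK q0) crossZl crossZr e cross_rot.
have hs : 0 <= sin t.
  apply: sin_ge0_pi; rewrite t0 /=; apply: (le_trans t1).
  have := pi_ge0 R; lra.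
apply: mulr_ge0; first exact: ltW (cnorm_gt0 p0).
apply: mulr_ge0; first exact: ltW (cnorm_gt0 q0).
apply: mulr_ge0; first by [].
by rewrite addr_ge0 ?sqr_ge0.
Qed.
End Geo.

Theorem theorem9p1 (R : realType) (V D : eqType)
  (pos : V -> R[i]) (dpos : D -> R[i])
  (deg : V -> nat) (nbr : V -> nat -> V) (face : V -> nat -> D)
  (black : V -> bool)
  (Hiso : isoradial_embedding pos dpos deg nbr face)
  (Hbip : bipartite_colouring deg nbr black)
  (fV : V -> R[i] -> R[i]) (fD : D -> R[i] -> R[i])
  (Hf : special_discrete_analytic pos dpos deg face black fV fD)
  (mu : {measure set (R * R)%type -> \bar R})
  (Hint : forall b : V, black b -> cintegrable mu (fV b)) :
  let F := fun b : V => cintegral mu (fV b) in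
  forall w : V, ~~ black w ->
    \sum_(b <- nbseq deg nbr w | black b) dbar pos dpos deg nbr face w b * F b = 0.
Proof.
move=> F w hw.
case: Hiso => Hdeg [Huniq [Hsym [Hf1 [Hf2 [Hpos [Hang Hrad]]]]]].
have cprev_lt : forall v j, (cprev deg v j < deg v)%N.
  by move=> v j; rewrite /cprev ltn_mod Hdeg.
have cprevS : forall v k, (k.+1 < deg v)%N -> cprev deg v k.+1 = k.
  by move=> v k hk; rewrite /cprev addSn /= modnDr modn_small //; exact: ltnW.
have cprev0 : forall v, cprev deg v 0 = (deg v).-1.
  move=> v; rewrite /cprev add0n modn_small //.
  by case: (deg v) (Hdeg v).
have cnext_prev : forall v j, (j < deg v)%N -> cnext deg v (cprev deg v j) = j.
  move=> v [|k] hk; first by rewrite cprev0 /cnext prednK ?Hdeg // modnn.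
  by rewrite cprevS // /cnext modn_small.
have blackn : forall j, (j < deg w)%N -> black (nbr w j).
  by move=> j hj; have := Hbip w j hj; move: hw; case: (black w); case: (black (nbr w j)).
have term : forall j, (j < deg w)%N -> forall z,
  dbar_edge pos dpos deg nbr face w j * fV (nbr w j) z =
  'i%C * (fD (face w (cprev deg w j)) z - fD (face w j) z).
  move=> j hj z.
  have bb := blackn j hj.
  have wb : w \in nbseq deg nbr (nbr w j).
    by rewrite -Hsym; apply/mapP; exists j => //; rewrite mem_iota add0n.
  have hi : (index w (nbseq deg nbr (nbr w j)) < deg (nbr w j))%N.
    by move: wb; rewrite -index_mem /nbseq size_map size_iota.
  have e1 := Hf1 w (cprev deg w j) (cprev_lt w j).
  rewrite /= cnext_prev // in e1.
  have e2 := Hf2 w j hj. rewrite /= in e2.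
  have h1 := Hf (nbr w j) _ hi. rewrite /= bb e1 in h1.
  have h2 := Hf (nbr w j) _ (cprev_lt (nbr w j) (index w (nbseq deg nbr (nbr w j)))).
  rewrite /= bb e2 in h2.
  have ha : 0 <= area4 (pos w) (dpos (face w (cprev deg w j))) (pos (nbr w j)) (dpos (face w j)).
    case: (Hang w) => t [ht [_ hrot]].
    have hc := cprev_lt w j.
    have hm : ((cprev deg w j).*2.+2 %% (deg w).*2 = j.*2)%N.
      case: (j) hj => [|k] hk.
        by rewrite cprev0 -doubleS prednK ?Hdeg // modnn.
      by rewrite cprevS // -doubleS modn_small // ltn_double.
    have r1 : rdir pos dpos nbr face w (cprev deg w j).*2.+1 = dpos (face w (cprev deg w j)) - pos w.
      by rewrite /rdir /= odd_double /= uphalf_double.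
    have r2 : rdir pos dpos nbr face w j.*2 = pos (nbr w j) - pos w.
      by rewrite /rdir odd_double doubleK.
    have r3 : rdir pos dpos nbr face w j.*2.+1 = dpos (face w j) - pos w.
      by rewrite /rdir /= odd_double /= uphalf_double.
    have nz : forall k, (k < deg w)%N -> dpos (face w k) - pos w != 0.
      move=> k hk; apply/eqP => h; have := Hrad w k hk.
      by rewrite h cnorm0 => /eqP; rewrite eq_sym oner_eq0.
    have nzb : pos (nbr w j) - pos w != 0 by rewrite subr_eq0 Hpos.
    rewrite /area4; apply: addr_ge0.
    - have l1 : ((cprev deg w j).*2.+1 < (deg w).*2)%N.
        by rewrite -doubleS leq_double.
      have := hrot _ l1; rewrite hm r1 r2 => e.
      exact: (cross_nonneg (nz _ hc) nzb (ht _ l1) e).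
    - have l2 : (j.*2 < (deg w).*2)%N by rewrite ltn_double.
      have l3 : (j.*2.+1 < (deg w).*2)%N by rewrite -doubleS leq_double.
      have := hrot _ l2; rewrite modn_small // r2 r3 => e.
      exact: (cross_nonneg nzb (nz _ hj) (ht _ l2) e).
  rewrite /dbar_edge /= ha h1 h2; ring.
rewrite /nbseq big_map big_seq_cond.
rewrite (eq_bigl (fun j => j \in iota 0 (deg w))); last first.
  move=> j /=; case hj: (j \in iota 0 (deg w)) => //=.
  by apply: blackn; move: hj; rewrite mem_iota add0n => /andP[].
rewrite -big_seq.
have hc : forall i, i \in iota 0 (deg w) -> cintegrable mu (fV (nbr w i)).
  by move=> i; rewrite mem_iota add0n => /andP[_ h]; apply: Hint; apply: blackn.
have [_ ci] := @cint_sum R mu nat (iota 0 (deg w)) (dbar_edge pos dpos deg nbr face w)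
   (fun j => fV (nbr w j)) hc.
rewrite (eq_big_seq (fun j => dbar_edge pos dpos deg nbr face w j * cintegral mu (fV (nbr w j)))); last first.
  move=> j; rewrite mem_iota add0n => /andP[_ hj].
  have hn : nbr w j = nth w (nbseq deg nbr w) j.
    by rewrite /nbseq (nth_map 0%N) ?size_iota // nth_iota.
  rewrite /F /dbar /=.
  have -> : index (nbr w j) (nbseq deg nbr w) = j.
    by rewrite {1}hn index_uniq ?(Huniq w).1 // size_map size_iota.
  by rewrite hj.
rewrite -ci.
have hnil : forall i : nat, i \in [::] -> cintegrable mu (fV (nbr w i)) by [].
have [_ c0] := @cint_sum R mu nat [::] (fun=> 0) (fun j => fV (nbr w j)) hnil.
rewrite big_nil in c0.
rewrite -[RHS]c0; congr cintegral; apply: funext => z; rewrite big_nil.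
rewrite big_seq (eq_bigr (fun j => 'i%C * (fD (face w (cprev deg w j)) z - fD (face w j) z))); last first.
  by move=> j; rewrite mem_iota add0n => /andP[_ h]; exact: term.
rewrite -big_seq -mulr_sumr sumrB.
have -> : iota 0 (deg w) = index_iota 0 (deg w) by rewrite /index_iota subn0.
rewrite !big_mkord.
have [k hk] : exists k, deg w = k.+1 by case: (deg w) (Hdeg w) => // k _; exists k.
move: (cprevS w) (cprev0 w); rewrite hk => cS c0'.
rewrite big_ord_recl big_ord_recr /= c0' /=.
rewrite (eq_bigr (fun i : 'I_k => fD (face w i) z)); last first.
  by move=> i _; rewrite /bump /= add1n cS // ltnS ltn_ord.
by rewrite [X in _ - X]addrC subrr mulr0.
Qed.
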